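(* Let $p$ be a prime and let $G$ be a finite $p$-group which is semi-$p$-abelian and inner semi-$p^{2}$-abelian. Then $\exp(G')\le p^{2}$, $\mho_{2}(G)\le Z(G)$, and $\mho_{1}(G)$ is abelian, i.e. $\mho_{1}(G)'=1$.
   Context: For a finite $p$-group $G$ and a positive integer $i$, $G$ is semi-$p^{i}$-abelian if for all $a,b\in G$: $(ab)^{p^{i}}=1$ if and only if $a^{p^{i}}b^{p^{i}}=1$. $G$ is inner semi-$p^{2}$-abelian if every proper subgroup of $G$ is semi-$p^{2}$-abelian but $G$ itself is not semi-$p^{2}$-abelian. $\mho_{i}(G)=\langle g^{p^{i}} : g\in G\rangle$. *)

(* Defs.v *)
From mathcomp Require Import all_boot all_fingroup all_solvable.
Set Implicit Arguments. Unset Strict Implicit. Unset Printing Implicit Defensive.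
Local Open Scope group_scope.

Definition semi_pi_abelian (gT : finGroupType) (p i : nat) (G : {set gT}) : Prop :=
  forall a b : gT, a \in G -> b \in G ->
    ((a * b) ^+ (p ^ i) == 1) = (a ^+ (p ^ i) * b ^+ (p ^ i) == 1).

Definition inner_semi_p2_abelian (gT : finGroupType) (p : nat) (G : {group gT}) : Prop :=
  (forall H : {group gT}, H \proper G -> semi_pi_abelian p 2 H) /\
  ~ semi_pi_abelian p 2 G.

(* Main.v *)
Require Import Defs.
From mathcomp Require Import all_boot all_fingroup all_solvable.
Local Open Scope group_scope.

Lemma fix_comm (gT : finGroupType) (x y : gT) : x ^ y = x -> commute x y.
Proof. by move=> h; apply/commgP/conjg_fixP. Qed.

Lemma comm_fix (gT : finGroupType) (x y : gT) : commute x y -> x ^ y = x.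
Proof. by move=> h; apply/conjg_fixP/commgP. Qed.
Arguments comm_fix {gT x y}.

Lemma semi_group (gT : finGroupType) (p i : nat) (H : {group gT}) :
  semi_pi_abelian p i H -> group_set [set x in H | x ^+ (p ^ i) == 1].
Proof.
move=> sH; apply/group_setP; split.
  by rewrite inE group1 /= expg1n.
move=> x y; rewrite !inE => /andP[Hx ex] /andP[Hy ey].
rewrite groupM //= sH // (eqP ex) (eqP ey) mulg1; by apply/eqP.
Qed.
Arguments semi_group {gT p i H}.

Lemma comm_group (gT : finGroupType) (G K : {group gT}) (y : gT) :
  G \subset 'N(K) -> group_set [set x in G | [~ x, y] \in K].
Proof.
move=> nKG; apply/group_setP; split.
  by rewrite inE group1 /= comm1g group1.
move=> x1 x2; rewrite !inE => /andP[Gx1 Kx1] /andP[Gx2 Kx2].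
by rewrite groupM // commMgJ groupM // memJ_norm // (subsetP nKG).
Qed.
Arguments comm_group {gT G K y}.

Lemma gen_comm (gT : finGroupType) (G K : {group gT}) (A : {set gT}) (y : gT) :
  G \subset 'N(K) -> G \subset <<A>> -> A \subset G ->
  (forall z, z \in A -> [~ z, y] \in K) ->
  forall x, x \in G -> [~ x, y] \in K.
Proof.
move=> nKG sGA sAG hA x Gx.
have sGT : G \subset Group (comm_group (y:=y) nKG).
  apply: subset_trans sGA _; rewrite gen_subG.
  by apply/subsetP => z Az; rewrite inE (subsetP sAG) // hA.
move/(subsetP sGT): Gx.
by rewrite inE => /andP[].
Qed.
Arguments gen_comm {gT G K A y}.

Theorem lemma2p5 (gT : finGroupType) (p : nat) (G : {group gT}) :
  prime p -> p.-group G ->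
  semi_pi_abelian p 1 G -> inner_semi_p2_abelian p G ->
  [/\ (exponent G^`(1) <= p ^ 2)%N,
      'Mho^2(G) \subset 'Z(G)
    & abelian 'Mho^1(G)].
Proof.
move=> pr_p pG semi1 [inner notG].
have nabG : ~~ abelian G.
  apply/negP => abG; apply: notG => a b Ga Gb.
  by rewrite expgMn //; apply: (centsP abG).
have maxx : forall x, x \in G ->
    exists M : {group gT}, [/\ M \proper G, M <| G & x \in M].
  move=> x Gx; have sxG : <[x]> \subset G by rewrite cycle_subG.
  case: (maximal_exists sxG) => [eq | [M maxM sxM]].
    by move: nabG; rewrite -eq cycle_abelian.
  exists M; split; first exact: (maxgroupp maxM).
    exact: p_maximal_normal pG maxM.
  by rewrite -cycle_subG.
have gen2 : forall a b, a \in G -> b \in G ->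
    ((a * b) ^+ (p ^ 2) == 1) != (a ^+ (p ^ 2) * b ^+ (p ^ 2) == 1) ->
    G \subset <<[set a; b]>>.
  move=> a b Ga Gb neq.
  have sHG : <<[set a; b]>> \subset G.
    by rewrite gen_subG; apply/subsetP => y; move=> /set2P[]->.
  apply: contraR neq => nsGH.
  have prH : <<[set a; b]>>%G \proper G by rewrite properE sHG.
  by rewrite (inner _ prH) // mem_gen // !inE eqxx ?orbT.
have : ~~ [forall a in G, forall b in G,
    ((a * b) ^+ (p ^ 2) == 1) == (a ^+ (p ^ 2) * b ^+ (p ^ 2) == 1)].
  apply/negP => /forall_inP h; apply: notG => a b Ga Gb.
  have := h a Ga; move=> /forall_inP /(_ b Gb) /eqP; exact.
move/forall_inPn => [a Ga /forall_inPn [b Gb neq]].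
have sGab := gen2 a b Ga Gb neq.
have [K [expK commK]] : exists K : {group gT},
   (forall k, k \in K -> k ^+ (p ^ 2) = 1) /\
   (forall x y, x \in G -> y \in G -> [~ x, y] \in K).
  case: (boolP [exists x in G, exists y in G,
     ((x * y) ^+ (p ^ 2) == 1) && (x ^+ (p ^ 2) * y ^+ (p ^ 2) != 1)]).
    move/exists_inP => [a1 Ga1 /exists_inP [b1 Gb1 /andP [e1 ne1]]].
    have sG1 : G \subset <<[set a1; b1]>>.
      by apply: gen2 => //; rewrite e1 (negbTE ne1).
    pose c := a1 * b1; have Gc : c \in G by rewrite groupM.
    have [M [prM nMG Mc]] := maxx c Gc.
    have sM := inner M prM.
    pose Kg := Group (semi_group sM).
    have nKG : G \subset 'N(Kg).
      apply/subsetP => g Gg; rewrite inE; apply/subsetP => y.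
      rewrite mem_conjg !inE => /andP[My ey].
      have nMg : g^-1 \in 'N(M) by rewrite (subsetP (normal_norm nMG)) ?groupV.
      rewrite -(memJ_norm y nMg) My /=.
      by rewrite -conjXg conjg_eq1 in ey.
    have Kc : c \in Kg by rewrite inE Mc e1.
    exists Kg; split.
      by move=> k; rewrite inE => /andP[_ /eqP].
    have hc : forall y, y \in G -> [~ c, y] \in Kg.
      move=> y Gy; rewrite commgEl groupM ?groupV // memJ_norm //.
      exact: (subsetP nKG).
    have sG2 : G \subset <<[set c; b1]>>.
      apply: subset_trans sG1 _; rewrite gen_subG; apply/subsetP => z.
      move=> /set2P[]->.
        have -> : a1 = c * b1^-1 by rewrite /c mulgK.
        by rewrite groupM ?groupV // mem_gen // !inE eqxx ?orbT.
      by rewrite mem_gen // !inE eqxx orbT.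
    have sAG : [set c; b1] \subset G.
      by apply/subsetP => z; move=> /set2P[]->.
    have hb : forall x, x \in G -> [~ x, b1] \in Kg.
      apply: (gen_comm nKG sG2 sAG) => z; move=> /set2P[]->.
        exact: hc.
      by rewrite commgg group1.
    move=> x y Gx Gy; apply: (gen_comm nKG sG2 sAG) => // z.
    move=> /set2P[]->; first exact: hc.
    by rewrite -invg_comm groupV hb.
  move=> hn.
  have F1 : forall x y, x \in G -> y \in G -> (x * y) ^+ (p ^ 2) == 1 ->
      x ^+ (p ^ 2) * y ^+ (p ^ 2) == 1.
    move=> x y Gx Gy e; apply: contraNT hn => ne.
    apply/exists_inP; exists x => //; apply/exists_inP; exists y => //.
    by rewrite e.
  have ne : (a * b) ^+ (p ^ 2) != 1.
    by apply/negP => e; move: neq; rewrite e (F1 a b Ga Gb e).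
  have eab : a ^+ (p ^ 2) * b ^+ (p ^ 2) == 1.
    by move: neq; rewrite (negbTE ne); case: (_ * _ == 1).
  pose Sg := [set x in G | x ^+ (p ^ 2) == 1].
  have gS : group_set Sg.
    apply/group_setP; split.
      by rewrite inE group1 /= expg1n.
    move=> x y; rewrite !inE => /andP[Gx ex] /andP[Gy ey].
    rewrite groupM //=.
    have := F1 (x * y) y^-1 (groupM Gx Gy) (groupVr Gy).
    rewrite mulgK (eqP ex) => /(_ (eqxx _)).
    by rewrite expVgn (eqP ey) invg1 mulg1.
  pose Sgg := Group gS.
  have nSG : G \subset 'N(Sgg).
    apply/subsetP => g Gg; rewrite inE; apply/subsetP => y.
    rewrite mem_conjg !inE => /andP[My ey].
    have nMg : g^-1 \in 'N(G) by rewrite (subsetP (normG G)) ?groupV.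
    rewrite -(memJ_norm y nMg) My /=.
    by rewrite -conjXg conjg_eq1 in ey.
  have key : forall u y, u \in G -> y \in G -> u ^+ (p ^ 2) \in 'C(G) ->
      [~ u, y] \in Sgg.
    move=> u y Gu Gy cu.
    have [M [prM nMG Mu]] := maxx u Gu.
    have sM := inner M prM.
    have Muy : u ^ y \in M by rewrite memJ_norm // (subsetP (normal_norm nMG)).
    rewrite commgEl inE groupM ?groupV ?groupJ //= sM ?groupV //.
    rewrite expVgn -conjXg (comm_fix (centP cu y Gy)) mulVg.
    by apply/eqP.
  have hb : b ^+ (p ^ 2) = (a ^+ (p ^ 2))^-1.
    by apply: (mulgI (a ^+ (p ^ 2))); rewrite (eqP eab) mulgV.
  have za : a ^+ (p ^ 2) \in 'C(G).
    apply: (subsetP (centS sGab)); rewrite cent_gen.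
    apply/centP => w; move=> /set2P[]->.
      exact/commute_sym/commuteX/commute_refl.
    rewrite -(invgK (a ^+ (p ^ 2))) -hb.
    exact/commute_sym/commuteV/commuteX/commute_refl.
  have sAG : [set a; b] \subset G.
    by apply/subsetP => z; move=> /set2P[]->.
  exists Sgg; split.
    by move=> k; rewrite inE => /andP[_ /eqP].
  move=> x y Gx Gy; apply: (gen_comm nSG sGab sAG) => // w.
  move=> /set2P[]->; first exact: key.
  by apply: key => //; rewrite hb groupV.
have expD : forall k, k \in G^`(1) -> k ^+ (p ^ 2) = 1.
  have sDK : G^`(1) \subset K.
    rewrite derg1 gen_subG; apply/subsetP => _ /imset2P[x y Gx Gy ->].
    exact: commK.
  by move=> k /(subsetP sDK) /expK.
have cent2 : forall x y, x \in G -> y \in G -> (x ^+ (p ^ 2)) ^ y = x ^+ (p ^ 2).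
  move=> x y Gx Gy; have [M [prM nMG Mx]] := maxx x Gx.
  have sM := inner M prM.
  have Mxy : x ^ y \in M by rewrite memJ_norm // (subsetP (normal_norm nMG)).
  have := sM _ _ (groupVr Mx) Mxy.
  rewrite -commgEl expD ?mem_commg // eqxx expVgn -conjXg.
  by move/esym; rewrite -eq_mulVg1 => /eqP <-.
split.
- apply: dvdn_leq; first by rewrite expn_gt0 prime_gt0.
  exact/exponentP.
- rewrite (MhoE 2 pG) gen_subG; apply/subsetP => _ /imsetP[x Gx ->].
  apply/centerP; split; first exact: groupX.
  by move=> y Gy; apply: fix_comm; exact: cent2.
rewrite (MhoE 1 pG) abelian_gen.
apply/centsP => _ /imsetP[x Gx ->] _ /imsetP[y Gy ->].
apply: fix_comm.
have Gw : y ^+ (p ^ 1) \in G by exact: groupX.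
have := semi1 _ _ (groupVr Gx) (groupJ Gx Gw).
rewrite -commgEl commgEr semi1 ?groupJ ?groupV //.
rewrite -conjXg expVgn -expgM -expnD conjVg cent2 // mulVg eqxx expVgn -conjXg.
by move/esym; rewrite -eq_mulVg1 => /eqP <-.
Qed.
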